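(* Let $q>0$, $q\ne1$, $\nu\ne0$ real. Let $\phi:(\mathbb{R}\setminus\{0\})\times\mathbb{R}\to\mathbb{R}$ be differentiable in $t$, nowhere zero, and satisfy the $q$-heat equation $\partial_t\phi(x,t)=\nu D_x^2\phi(x,t)$. Define $u(x,t)=-2\nu\,\frac{D_x\phi(x,t)}{\phi(x,t)}$. Then for all $x\ne0$ and $t$, $$\partial_tu(x,t)-\nu D_x^2u(x,t)=\tfrac12\,u(x,t)\big[(1-M_q^x)D_xu\big](x,t)-\tfrac12 D_x\big(u(qx,t)u(x,t)\big)+\frac{1}{4\nu}\big[u(q^2x,t)-u(x,t)\big]u(qx,t)u(x,t).$$
   Context: $D_x$ is the $q$-derivative in $x$ at fixed $t$: $D_xf(x,t)=\frac{f(qx,t)-f(x,t)}{(q-1)x}$, $D_x^2=D_x\circ D_x$; $\partial_t$ is the ordinary time derivative. $M_q^x$ is the dilation operator $(M_q^xf)(x,t)=f(qx,t)$, so $[(1-M_q^x)D_xu](x,t)=(D_xu)(x,t)-(D_xu)(qx,t)$. *)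

(* Defs.v *)
From Stdlib Require Import Reals.
From Coquelicot Require Import Coquelicot.
Open Scope R_scope.

Definition qD (q : R) (f : R -> R) (x : R) : R :=
  (f (q * x) - f x) / ((q - 1) * x).

Definition qDx (q : R) (F : R -> R -> R) (x t : R) : R :=
  qD q (fun y => F y t) x.

Definition qDx2 (q : R) (F : R -> R -> R) (x t : R) : R :=
  qDx q (fun y s => qDx q F y s) x t.

Definition qM (q : R) (F : R -> R -> R) (x t : R) : R := F (q * x) t.

Definition coleHopf (q nu : R) (phi : R -> R -> R) (x t : R) : R :=
  - 2 * nu * qDx q phi x t / phi x t.

(* Main.v *)
Require Import Defs.
From Stdlib Require Import Reals Lra.
From Coquelicot Require Import Coquelicot.
Open Scope R_scope.

Lemma derive_u (q nu : R) (phi : R -> R -> R) x t d0 d1 :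
  (q - 1) * x <> 0 -> phi x t <> 0 ->
  is_derive (fun s => phi x s) t d0 ->
  is_derive (fun s => phi (q*x) s) t d1 ->
  Derive (fun s => coleHopf q nu phi x s) t =
  ((- 2 * nu / ((q - 1) * x)) * (d1 - d0) * phi x t
  - (- 2 * nu / ((q - 1) * x)) * (phi (q*x) t - phi x t) * d0) / (phi x t ^ 2).
Proof.
  intros hx hn H0 H1.
  apply is_derive_unique.
  unfold coleHopf, qDx, qD.
  assert (Hm : is_derive (fun s => phi (q*x) s - phi x s) t (d1 - d0)).
  { exact (is_derive_minus _ _ t d1 d0 H1 H0). }
  assert (Hs : is_derive (fun s => (- 2 * nu / ((q - 1) * x)) * (phi (q*x) s - phi x s)) t
                 ((- 2 * nu / ((q - 1) * x)) * (d1 - d0))).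
  { exact (is_derive_scal _ t _ _ Hm). }
  pose proof (is_derive_div _ _ t _ _ Hs H0 hn) as Hd.
  eapply is_derive_ext; [|exact Hd].
  intros s. simpl. unfold Rdiv. ring.
Qed.

Theorem mainTheorem12 (q nu : R) (phi : R -> R -> R)
  (hq0 : 0 < q) (hq1 : q <> 1) (hnu : nu <> 0)
  (hdiff : forall x t, x <> 0 -> ex_derive (fun s => phi x s) t)
  (hnz : forall x t, x <> 0 -> phi x t <> 0)
  (hheat : forall x t, x <> 0 ->
     Derive (fun s => phi x s) t = nu * qDx2 q phi x t) :
  let u := coleHopf q nu phi in
  forall x t, x <> 0 ->
    Derive (fun s => u x s) t - nu * qDx2 q u x t
    = / 2 * u x t * (qDx q u x t - qM q (qDx q u) x t)
      - / 2 * qDx q (fun y s => u (q * y) s * u y s) x t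
      + / (4 * nu) * (u (q * (q * x)) t - u x t) * u (q * x) t * u x t.
Proof.
  intros u x t hx.
  assert (hq : q <> 0) by lra.
  assert (hq1' : q - 1 <> 0) by lra.
  assert (h1 : q * x <> 0) by (apply Rmult_integral_contrapositive; tauto).
  assert (h2 : q * (q * x) <> 0) by (apply Rmult_integral_contrapositive; tauto).
  assert (h3 : q * (q * (q * x)) <> 0) by (apply Rmult_integral_contrapositive; tauto).
  assert (hk : (q - 1) * x <> 0) by (apply Rmult_integral_contrapositive; tauto).
  assert (D0 : is_derive (fun s => phi x s) t (nu * qDx2 q phi x t)).
  { rewrite <- (hheat x t hx). apply Derive_correct. apply hdiff; auto. }
  assert (D1 : is_derive (fun s => phi (q*x) s) t (nu * qDx2 q phi (q*x) t)).
  { rewrite <- (hheat (q*x) t h1). apply Derive_correct. apply hdiff; auto. }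
  pose proof (hnz x t hx). pose proof (hnz (q*x) t h1).
  pose proof (hnz (q*(q*x)) t h2). pose proof (hnz (q*(q*(q*x))) t h3).
  unfold u. rewrite (derive_u q nu phi x t _ _ hk (hnz x t hx) D0 D1).
  unfold coleHopf, qM, qDx2, qDx, qD.
  field. repeat split; auto.
Qed.
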